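(* In a qubit stabilizer subsystem code, a region $R$ of physical qubits is bare-cleanable if and only if for every Pauli operator $P_L$ on the logical subsystem there exists a bare-CSP Pauli operator $P$ supported on $R^c$ that implements $P_L\otimes\mathrm{Id}_J$.
   Context: Stabilizer subsystem code: stabilizer group (abelian subgroup of the Pauli group not containing $-\mathrm{Id}$) with code space its common $+1$ eigenspace, isomorphic via an encoding isometry $V$ to an encoded space of encoded qubits, equipped with the tensor product structure and basis such that every codespace-preserving physical Pauli operator implements an encoded Pauli operator; the encoded qubits are divided into a logical subsystem $\mathcal{H}_L$ (at least one qubit) and a junk subsystem $\mathcal{H}_J$. $\Pi=VV^\dagger$. $A$ is CSP if $[A,\Pi]=0$; dressed-CSP if moreover $V^\dagger AV=A_L\otimes A_J$ (it implements $A_L\otimes A_J$); bare-CSP if also $A_J=\mathrm{Id}_J$. Supported on $R$: of the form $A_R\otimes\mathrm{Id}_{R^c}$. $R$ is bare-cleanable (correctable) if for every logical operator $A_L\in\mathcal{B}(\mathcal{H}_L)$ there is a bare-CSP operator supported on $R^c$ implementing $A_L\otimes\mathrm{Id}_J$. *)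

(* Defs.v *)
From HB Require Import structures.
From mathcomp Require Import all_boot all_order all_algebra.
Set Implicit Arguments. Unset Strict Implicit. Unset Printing Implicit Defensive.
Import Order.TTheory GRing.Theory Num.Theory.
Local Open Scope ring_scope.

(* Scalars: any numeric algebraically closed field C (e.g. the complex numbers
   ℂ = R[i]); Num.conj is complex conjugation, 'i the imaginary unit. *)
Section Qubits.
Variable C : numClosedFieldType.

(* computational-basis configurations of n qubits *)
Definition conf (n : nat) := {ffun 'I_n -> bool}.

(* operators on the Hilbert space with orthonormal basis indexed by T *)
Definition op (T : finType) := 'M[C]_#|T|.
Definition ent (T : finType) (A : op T) (x y : T) : C :=
  A (enum_rank x) (enum_rank y).
Definition mxf (T : finType) (f : T -> T -> C) : op T :=
  \matrix_(i, j) f (enum_val i) (enum_val j).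

Definition adj (p q : nat) (A : 'M[C]_(p, q)) : 'M[C]_(q, p) :=
  (map_mx Num.conj A)^T.

Definition tens (T1 T2 : finType) (A : op T1) (B : op T2) : op (T1 * T2)%type :=
  mxf (fun x y => ent A x.1 y.1 * ent B x.2 y.2).

(* single-qubit Paulis: 0 = I, 1 = X, 2 = Y, 3 = Z; entry <a| sigma |b> *)
Definition sigma (p : 'I_4) (a b : bool) : C :=
  match val p with
  | 0 => (a == b)%:R
  | 1 => (a != b)%:R
  | 2 => if a == b then 0 else if b then - 'i else 'i
  | _ => if a == b then (if a then -1 else 1) else 0
  end.

(* n-qubit Pauli operator  i^c  (s_0 ⊗ ... ⊗ s_{n-1}) *)
Definition pauli (n : nat) (c : 'I_4) (s : 'I_n -> 'I_4) : op (conf n) :=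
  mxf (fun x y : conf n => 'i ^+ c * \prod_(q < n) sigma (s q) (x q) (y q)).
Definition is_pauli (n : nat) (A : op (conf n)) : Prop :=
  exists c s, A = pauli c s.

(* Pauli operator on the encoded space  H_L ⊗ H_J  (k logical, m junk qubits) *)
Definition is_enc_pauli (k m : nat) (A : op (conf k * conf m)%type) : Prop :=
  exists c sL sJ, A = tens (pauli c sL) (pauli (0 : 'I_4) sJ).

(* A is supported on R : A = A_R ⊗ Id_{R^c} *)
Definition supported_on (n : nat) (R : {set 'I_n}) (A : op (conf n)) : Prop :=
  exists g : conf n -> conf n -> C,
    (forall x y x' y' : conf n, (forall q, q \in R -> x q = x' q /\ y q = y' q) ->
       g x y = g x' y') /\
    (forall x y : conf n, ent A x y =
       if [forall q, (q \notin R) ==> (x q == y q)] then g x y else 0).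

Section Code.
Variables n k m : nat.
Let Enc : finType := (conf k * conf m)%type.
Variable V : 'M[C]_(#|conf n|, #|{: Enc}|).

Definition Pi : op (conf n) := V *m adj V.
Definition CSP (A : op (conf n)) : Prop := A *m Pi = Pi *m A.
Definition implements (A : op (conf n)) (B : op Enc) : Prop := adj V *m A *m V = B.
Definition bare_CSP_impl (A : op (conf n)) (AL : op (conf k)) : Prop :=
  CSP A /\ implements A (tens AL 1%:M).

Record stabilizer_subsystem_code (S : op (conf n) -> Prop) : Prop := {
  ssc_pauli : forall s, S s -> is_pauli s;
  ssc_one : S 1%:M;
  ssc_mul : forall s t, S s -> S t -> S (s *m t);
  ssc_abelian : forall s t, S s -> S t -> s *m t = t *m s;
  ssc_noneg : ~ S (- 1%:M);
  ssc_isometry : adj V *m V = 1%:M;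
  ssc_codespace : forall v : 'cV[C]_#|conf n|,
      (exists w, v = V *m w) <-> (forall s, S s -> s *m v = v);
  ssc_basis : forall P, is_pauli P -> CSP P ->
      is_enc_pauli (adj V *m P *m V)
}.

Definition bare_cleanable (R : {set 'I_n}) : Prop :=
  forall AL : op (conf k),
    exists A : op (conf n), supported_on (~: R) A /\ bare_CSP_impl A AL.

End Code.
End Qubits.

(* Main.v *)
Require Import Defs.
From mathcomp Require Import all_boot all_order all_algebra.
Set Implicit Arguments. Unset Strict Implicit. Unset Printing Implicit Defensive.
Import Order.TTheory GRing.Theory Num.Theory.
Local Open Scope ring_scope.

Section S.
Variable C : numClosedFieldType.

Lemma entE (T : finType) (A : op C T) x y : ent A x y = A (enum_rank x) (enum_rank y).
Proof. by []. Qed.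

Lemma ent_mxf (T : finType) (f : T -> T -> C) x y : ent (mxf f) x y = f x y.
Proof. by rewrite /ent /mxf mxE !enum_rankK. Qed.

Lemma op_eq (T : finType) (A B : op C T) : (forall x y, ent A x y = ent B x y) -> A = B.
Proof.
move=> h; apply/matrixP => i j.
by have := h (enum_val i) (enum_val j); rewrite /ent !enum_valK.
Qed.

Lemma ent_mul (T : finType) (A B : op C T) x y :
  ent (A *m B) x y = \sum_z ent A x z * ent B z y.
Proof.
rewrite /ent mxE.
rewrite (reindex (@enum_rank T)) /=; last by apply: onW_bij; exact: enum_rank_bij.
by [].
Qed.

Lemma ent_add (T : finType) (A B : op C T) x y : ent (A + B) x y = ent A x y + ent B x y.
Proof. by rewrite /ent mxE. Qed.
Lemma ent_scale (T : finType) a (A : op C T) x y : ent (a *: A) x y = a * ent A x y.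
Proof. by rewrite /ent mxE. Qed.
Lemma ent_sum (T : finType) (I : finType) (F : I -> op C T) x y :
  ent (\sum_i F i) x y = \sum_i ent (F i) x y.
Proof. by rewrite /ent summxE. Qed.
Lemma ent0 (T : finType) x y : ent (0 : op C T) x y = 0.
Proof. by rewrite /ent mxE. Qed.
Lemma ent1 (T : finType) x y : ent (1%:M : op C T) x y = (x == y)%:R.
Proof. by rewrite /ent mxE (inj_eq enum_rank_inj). Qed.
Lemma ent_adj (T : finType) (A : op C T) x y : ent (adj A) x y = (ent A y x)^*.
Proof. by rewrite /ent /adj !mxE. Qed.

Lemma iiN : 'i * 'i = -1 :> C. Proof. by rewrite -expr2 sqrCi. Qed.
Lemma cj (z : C) : Num.Num_conj__canonical__GRing_RMorphism C z = z^*. Proof. by []. Qed.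

Ltac ord4 p := case: p => [[|[|[|[|?]]]] ?] //.
Ltac csimp0 := rewrite ?cj; rewrite ?rmorphN; rewrite ?cj; rewrite ?conjCi ?conjC1 ?rmorph1 ?conjC0 ?opprK ?mul0r ?mulr0 ?add0r ?addr0 ?mul1r ?mulr1 ?mulrNN ?mulNr ?mulrN ?iiN ?opprK ?oppr0 ?mul0rn ?addrN ?addNr.
Ltac csimp := do 3 csimp0.

Lemma sigma_unit (p : 'I_4) x y :
  \sum_b (sigma C p b x)^* * sigma C p b y = (x == y)%:R.
Proof.
rewrite big_bool /sigma; ord4 p; case: x; case: y => /=; csimp => //.
Qed.

Definition eps (p q : 'I_4) : C :=
  if (val p == 0)%N || (val q == 0)%N || (p == q) then 1 else -1.

Lemma sigma_comm (p q : 'I_4) x y :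
  \sum_b sigma C p x b * sigma C q b y = eps p q * \sum_b sigma C q x b * sigma C p b y.
Proof.
rewrite /eps !big_bool /sigma; ord4 p; ord4 q; case: x; case: y => /=; csimp => //.
Qed.

Lemma sigma_orth (p q : 'I_4) :
  \sum_a \sum_b (sigma C p a b)^* * sigma C q a b = (p == q)%:R *+ 2.
Proof.
rewrite !big_bool /sigma; ord4 p; ord4 q => /=; csimp => //.
Qed.

Lemma sigma_compl a b x y :
  \sum_(p < 4) (sigma C p a b)^* * sigma C p x y = ((x == a)%:R * (y == b)%:R) *+ 2.
Proof.
rewrite !big_ord_recl big_ord0 /sigma; case: a; case: b; case: x; case: y => /=; csimp => //.
Qed.

Lemma sum_prod n (F : 'I_n -> bool -> C) :
  \sum_(z : conf n) \prod_q F q (z q) = \prod_q \sum_b F q b.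
Proof. by rewrite bigA_distr_bigA. Qed.

Lemma pauliE n c (s : 'I_n -> 'I_4) x y :
  ent (pauli C c s) x y = 'i ^+ c * \prod_q sigma C (s q) (x q) (y q).
Proof. by rewrite /pauli ent_mxf. Qed.

Lemma pauli_scale n c (s : 'I_n -> 'I_4) : pauli C c s = 'i ^+ c *: pauli C 0 s.
Proof. by apply: op_eq => x y; rewrite ent_scale !pauliE expr0 mul1r. Qed.

Lemma pauli_ext n c (s s' : 'I_n -> 'I_4) : (forall q, s q = s' q) -> pauli C c s = pauli C c s'.
Proof. by move=> h; apply: op_eq => x y; rewrite !pauliE; congr (_ * _); apply: eq_bigr => q _; rewrite h. Qed.

Lemma prod_eqb n (x y : conf n) : \prod_q ((x q == y q)%:R : C) = (x == y)%:R.
Proof.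
case: (boolP [forall q, x q == y q]) => [/forallP h | ].
  have -> : x = y by apply/ffunP => q; apply/eqP.
  by rewrite eqxx big1 // => q _; rewrite eqxx.
rewrite negb_forall => /existsP [q hq].
rewrite (bigD1 q) //= (negbTE hq) mul0r.
case: eqP => // exy; move: hq; by rewrite exy eqxx.
Qed.

Lemma pauli_one n : pauli C 0 (fun _ : 'I_n => 0) = 1%:M.
Proof.
apply: op_eq => x y; rewrite pauliE ent1 expr0 mul1r -prod_eqb.
by apply: eq_bigr => q _; rewrite /sigma.
Qed.

Lemma conj_ipow (c : nat) : ('i ^+ c)^* * 'i ^+ c = 1 :> C.
Proof. by rewrite rmorphXn cj conjCi -exprMn mulNr iiN opprK expr1n. Qed.

Lemma pauli_unitary n c (s : 'I_n -> 'I_4) : adj (pauli C c s) *m pauli C c s = 1%:M.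
Proof.
apply: op_eq => x y; rewrite ent_mul ent1 -prod_eqb.
rewrite (eq_bigr (fun z => (ent (pauli C c s) z x)^* * ent (pauli C c s) z y)); last first.
  by move=> z _; rewrite /ent /adj !mxE.
under eq_bigr => z _ do rewrite !pauliE rmorphM mulrACA rmorph_prod -big_split /=.
rewrite -mulr_sumr conj_ipow mul1r (sum_prod (fun q b => (sigma C (s q) b (x q))^* * sigma C (s q) b (y q))).
by apply: eq_bigr => q _; rewrite sigma_unit.
Qed.

Lemma pauli_mulE n c c' (s s' : 'I_n -> 'I_4) x y :
  ent (pauli C c s *m pauli C c' s') x y =
  'i ^+ c * 'i ^+ c' * \prod_q \sum_b sigma C (s q) (x q) b * sigma C (s' q) b (y q).
Proof.
rewrite (@ent_mul (conf n)).
rewrite (eq_bigr (fun z : conf n => 'i ^+ c * 'i ^+ c' * \prod_q (sigma C (s q) (x q) (z q) * sigma C (s' q) (z q) (y q)))); last first.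
  by move=> z _; rewrite !pauliE mulrACA -big_split.
by rewrite -mulr_sumr (sum_prod (fun q b => sigma C (s q) (x q) b * sigma C (s' q) b (y q))).
Qed.

Lemma pauli_comm n c c' (s s' : 'I_n -> 'I_4) :
  pauli C c s *m pauli C c' s' = (\prod_q eps (s q) (s' q)) *: (pauli C c' s' *m pauli C c s).
Proof.
apply: op_eq => x y; rewrite ent_scale !pauli_mulE.
rewrite mulrCA [_ ^+ c' * _]mulrC; congr (_ * _).
rewrite -big_split /=; apply: eq_bigr => q _.
exact: sigma_comm.
Qed.

Lemma prod_eps n (s s' : 'I_n -> 'I_4) :
  \prod_q eps (s q) (s' q) = 1 \/ \prod_q eps (s q) (s' q) = -1.
Proof.
apply: (big_ind (fun e : C => e = 1 \/ e = -1)); first by left.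
  by move=> a b [->|->] [->|->]; rewrite ?mul1r ?mulr1 ?mulrNN ?mulr1; auto.
by move=> q _; rewrite /eps; case: ifP; auto.
Qed.


Lemma prod_bool (I : finType) (P : pred I) : \prod_(q : I) ((P q)%:R : C) = [forall q, P q]%:R.
Proof.
case: (boolP [forall q, P q]) => [/forallP h | ].
  by rewrite big1 // => q _; rewrite h.
rewrite negb_forall => /existsP [q hq].
by rewrite (bigD1 q) //= (negbTE hq) mul0r.
Qed.

Definition wgt n (T : {set 'I_n}) (q : 'I_n) (a b : bool) (p : 'I_4) : C :=
  if q \in T then 2^-1 * (sigma C p a b)^* else ((a == false) && (b == false) && (val p == 0)%N)%:R.

Lemma two_neq0 : (2 : C) != 0.
Proof. by rewrite pnatr_eq0. Qed.

Lemma wgt_sum n (T : {set 'I_n}) q a b x y :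
  \sum_(p < 4) wgt T q a b p * sigma C p x y =
  ((if q \in T then (x == a) && (y == b) else (a == false) && (b == false) && (x == y)))%:R.
Proof.
rewrite /wgt; case: (q \in T).
  under eq_bigr do rewrite -mulrA.
  rewrite -mulr_sumr sigma_compl -(mulr_natl (_ * _) 2) mulrA mulVf ?two_neq0 // mul1r.
  by rewrite -natrM mulnb.
rewrite big_ord_recl big1 ?addr0; last by move=> i _; rewrite andbF mul0r.
by rewrite andbT /sigma /= -natrM mulnb.
Qed.

Lemma expand n (T : {set 'I_n}) (A : op C (conf n)) : supported_on T A ->
  exists c : {ffun 'I_n -> 'I_4} -> C,
    A = \sum_s c s *: pauli C 0 s /\
    forall s, c s != 0 -> forall q, q \notin T -> s q = 0.
Proof.
case=> g [ginv hA].
pose c (s : {ffun 'I_n -> 'I_4}) :=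
  \sum_(a : conf n) \sum_(b : conf n) g a b * \prod_q wgt T q (a q) (b q) (s q).
exists c; split; last first.
  move=> s cs q qT; apply/eqP; apply: contraNT cs => sq.
  rewrite /c big1 // => a _; rewrite big1 // => b _.
  have sq' : (val (s q) == 0%N) = false.
    by apply/negbTE; move: sq; apply: contra => /eqP h; apply/eqP/val_inj.
  by rewrite (bigD1 q) //= /wgt (negbTE qT) sq' andbF mul0r mulr0.
apply: op_eq => x y.
rewrite ent_sum.
transitivity (\sum_(a : conf n) \sum_(b : conf n) g a b *
   \prod_q \sum_(p < 4) wgt T q (a q) (b q) p * sigma C p (x q) (y q)); last first.
  transitivity (\sum_(a : conf n) \sum_(b : conf n) \sum_(s : {ffun 'I_n -> 'I_4})
     g a b * \prod_q wgt T q (a q) (b q) (s q) * \prod_q sigma C (s q) (x q) (y q)).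
    apply: eq_bigr => a _; apply: eq_bigr => b _.
    rewrite (bigA_distr_bigA (fun q p => wgt T q (a q) (b q) p * sigma C p (x q) (y q))).
    rewrite mulr_sumr; apply: eq_bigr => s _.
    by rewrite big_split /= mulrA.
  rewrite exchange_big /=.
  under eq_bigr => a _ do rewrite exchange_big /=.
  rewrite exchange_big /=.
  apply: eq_bigr; move=> s _.
  rewrite ent_scale pauliE expr0 mul1r /c mulr_suml.
  under [RHS]eq_bigr do rewrite mulr_suml.
  by rewrite [RHS]exchange_big.
pose a0 : conf n := [ffun q => if q \in T then x q else false].
pose b0 : conf n := [ffun q => if q \in T then y q else false].
have key : forall a b : conf n,
  \prod_q \sum_(p < 4) wgt T q (a q) (b q) p * sigma C p (x q) (y q) =
  ((a == a0) && (b == b0) && [forall q, (q \notin T) ==> (x q == y q)])%:R.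
  move=> a b.
  rewrite (eq_bigr (fun q => ((if q \in T then (x q == a q) && (y q == b q)
      else (a q == false) && (b q == false) && (x q == y q)))%:R)); last first.
    by move=> q _; rewrite wgt_sum.
  rewrite prod_bool; congr (_%:R).
  congr (nat_of_bool _).
  apply/idP/idP.
    move=> /forallP h; rewrite -andbA; apply/and3P; split.
    - apply/eqP/ffunP => q; rewrite ffunE; have := h q.
      by case: (q \in T) => [/andP [/eqP -> _] | /andP [/andP [/eqP -> _] _]].
    - apply/eqP/ffunP => q; rewrite ffunE; have := h q.
      by case: (q \in T) => [/andP [_ /eqP ->] | /andP [/andP [_ /eqP ->] _]].
    apply/forallP => q; have := h q.
    by case: (q \in T) => //= /andP [_ ->].
  move=> /andP [/andP [/eqP -> /eqP ->] /forallP h]; apply/forallP => q.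
  rewrite !ffunE; have := h q.
  by case: (q \in T) => /= [_ | ->]; rewrite ?eqxx.
under eq_bigr => a _ do under eq_bigr => b _ do rewrite key.
rewrite [RHS](bigD1 a0) //= [X in _ + X]big1 ?addr0; last first.
  move=> a na; rewrite big1 // => b _; by rewrite (negbTE na) mulr0.
rewrite [RHS](bigD1 b0) //= [X in _ + X]big1 ?addr0; last first.
  move=> b nb; by rewrite (negbTE nb) andbF mulr0.
rewrite !eqxx /= hA.
have -> : g a0 b0 = g x y.
  apply: ginv => q qT; by rewrite !ffunE qT.
by case: ifP; rewrite ?mulr1 ?mulr0.
Qed.


Lemma prod_bool_cond (I : finType) (P Q : pred I) :
  \prod_(q | P q) ((Q q)%:R : C) = [forall q, P q ==> Q q]%:R.
Proof.
rewrite big_mkcond /= -prod_bool; apply: eq_bigr => q _; by case: (P q).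
Qed.

Lemma pauli_supp n (T : {set 'I_n}) c (s : 'I_n -> 'I_4) :
  (forall q, q \notin T -> s q = 0) -> supported_on T (pauli C c s).
Proof.
move=> hs.
exists (fun x y => 'i ^+ c * \prod_(q in T) sigma C (s q) (x q) (y q)); split.
  move=> x y x' y' h; congr (_ * _); apply: eq_bigr => q qT.
  by have [-> ->] := h q qT.
move=> x y; rewrite pauliE (bigID (mem T)) /=.
rewrite [X in _ * (_ * X)](eq_bigr (fun q => (x q == y q)%:R)); last first.
  by move=> q qT; rewrite hs.
rewrite (prod_bool_cond (fun q => ~~ (q \in T)) (fun q => x q == y q)).
by case: ifP => _; rewrite ?mulr1 ?mulr0.
Qed.

Lemma supp0 n (T : {set 'I_n}) : supported_on T (0 : op C (conf n)).
Proof. by exists (fun _ _ => 0); split => // x y; rewrite ent0; case: ifP. Qed.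

Lemma suppD n (T : {set 'I_n}) (A B : op C (conf n)) :
  supported_on T A -> supported_on T B -> supported_on T (A + B).
Proof.
move=> [g [gi hg]] [h [hi hh]].
exists (fun x y => g x y + h x y); split.
  by move=> x y x' y' e; rewrite (gi _ _ x' y') // (hi _ _ x' y').
by move=> x y; rewrite ent_add hg hh; case: ifP; rewrite ?addr0.
Qed.

Lemma suppZ n (T : {set 'I_n}) a (A : op C (conf n)) :
  supported_on T A -> supported_on T (a *: A).
Proof.
move=> [g [gi hg]].
exists (fun x y => a * g x y); split.
  by move=> x y x' y' e; rewrite (gi _ _ x' y').
by move=> x y; rewrite ent_scale hg; case: ifP; rewrite ?mulr0.
Qed.

Lemma supp_sum n (T : {set 'I_n}) (I : finType) (c : I -> C) (F : I -> op C (conf n)) :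
  (forall i, supported_on T (F i)) -> supported_on T (\sum_i c i *: F i).
Proof.
move=> h; apply: (big_ind (supported_on T)).
- exact: supp0.
- exact: suppD.
- by move=> i _; apply: suppZ.
Qed.

Lemma supp_setT n (A : op C (conf n)) : supported_on setT A.
Proof.
exists (ent A); split.
  move=> x y x' y' h.
  have -> : x = x' by apply/ffunP => q; have [] := h q (in_setT q).
  have -> : y = y' by apply/ffunP => q; have [] := h q (in_setT q).
  by [].
move=> x y; have -> : [forall q, (q \notin setT) ==> (x q == y q)].
  by apply/forallP => q; rewrite in_setT.
by [].
Qed.

Lemma ent_tens (T1 T2 : finType) (A : op C T1) (B : op C T2) x y :
  ent (tens A B) x y = ent A x.1 y.1 * ent B x.2 y.2.
Proof. by rewrite /tens ent_mxf. Qed.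

Lemma tens_sum (T1 T2 : finType) (I : finType) (c : I -> C) (A : I -> op C T1) (B : op C T2) :
  tens (\sum_i c i *: A i) B = \sum_i c i *: tens (A i) B.
Proof.
apply: op_eq => x y; rewrite ent_tens !ent_sum mulr_suml; apply: eq_bigr => i _.
by rewrite !ent_scale ent_tens mulrA.
Qed.

Lemma tensZ (T1 T2 : finType) a (A : op C T1) (B : op C T2) :
  tens (a *: A) B = a *: tens A B.
Proof. by apply: op_eq => x y; rewrite ent_tens !ent_scale ent_tens mulrA. Qed.

Definition phi (T : finType) (Q X : op C T) : C := \sum_x \sum_y (ent Q x y)^* * ent X x y.

Lemma phi_lin (T : finType) (I : finType) (Q : op C T) (c : I -> C) (X : I -> op C T) :
  phi Q (\sum_i c i *: X i) = \sum_i c i * phi Q (X i).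
Proof.
rewrite /phi.
under eq_bigr => x _ do under eq_bigr => y _ do rewrite ent_sum mulr_sumr.
under [RHS]eq_bigr => i _ do rewrite mulr_sumr.
rewrite [RHS]exchange_big /=; apply: eq_bigr => x _.
under [RHS]eq_bigr => i _ do rewrite mulr_sumr.
rewrite [RHS]exchange_big /=; apply: eq_bigr => y _.
apply: eq_bigr => i _; by rewrite ent_scale mulrCA.
Qed.

Lemma sum_pair (T1 T2 : finType) (F : T1 * T2 -> C) :
  \sum_x F x = \sum_x1 \sum_x2 F (x1, x2).
Proof. by rewrite pair_bigA; apply: eq_bigr => -[]. Qed.

Lemma phi_tens (T1 T2 : finType) (A A' : op C T1) (B B' : op C T2) :
  phi (tens A B) (tens A' B') = phi A A' * phi B B'.
Proof.
rewrite /phi sum_pair.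
under eq_bigr => x1 _ do under eq_bigr => x2 _ do rewrite sum_pair.
rewrite mulr_suml; apply: eq_bigr => x1 _.
rewrite exchange_big mulr_suml; apply: eq_bigr => y1 _ /=.
rewrite mulr_sumr; apply: eq_bigr => x2 _.
rewrite mulr_sumr; apply: eq_bigr => y2 _.
by rewrite !ent_tens /= rmorphM mulrACA.
Qed.


Lemma phi_pauli n c c' (s s' : 'I_n -> 'I_4) :
  phi (pauli C c s) (pauli C c' s') =
  ('i ^+ c)^* * 'i ^+ c' * \prod_q ((s q == s' q)%:R *+ 2).
Proof.
rewrite /phi.
rewrite (eq_bigr (fun x : conf n => ('i ^+ c)^* * 'i ^+ c' *
   \sum_(y : conf n) \prod_q ((sigma C (s q) (x q) (y q))^* * sigma C (s' q) (x q) (y q)))); last first.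
  move=> x _; rewrite mulr_sumr; apply: eq_bigr => y _.
  by rewrite !pauliE rmorphM rmorph_prod mulrACA -big_split.
rewrite -mulr_sumr; congr (_ * _).
rewrite (eq_bigr (fun x : conf n => \prod_q \sum_b (sigma C (s q) (x q) b)^* * sigma C (s' q) (x q) b)); last first.
  move=> x _; exact: (sum_prod (fun q b => (sigma C (s q) (x q) b)^* * sigma C (s' q) (x q) b)).
rewrite (sum_prod (fun q a => \sum_b (sigma C (s q) a b)^* * sigma C (s' q) a b)).
by apply: eq_bigr => q _; rewrite sigma_orth.
Qed.

Lemma phi_pauli_neq0 n c c' (s s' : 'I_n -> 'I_4) :
  phi (pauli C c s) (pauli C c' s') != 0 -> forall q, s q = s' q.
Proof.
rewrite phi_pauli => h q; apply/eqP; apply: contraNT h => ne.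
by rewrite (bigD1 q) //= (negbTE ne) mul0rn mul0r mulr0.
Qed.

Lemma phi_pauli_self n c (s : 'I_n -> 'I_4) : phi (pauli C c s) (pauli C c s) != 0.
Proof.
rewrite phi_pauli conj_ipow mul1r; apply/prodf_neq0 => q _.
by rewrite eqxx -mulr_natl mulr1 pnatr_eq0.
Qed.


Lemma adj_mul p q r (A : 'M[C]_(p, q)) (B : 'M[C]_(q, r)) : adj (A *m B) = adj B *m adj A.
Proof. by rewrite /adj map_mxM trmx_mul. Qed.

Lemma adjK p q (A : 'M[C]_(p, q)) : adj (adj A) = A.
Proof. by apply/matrixP => i j; rewrite /adj !mxE conjCK. Qed.

Lemma adj_opp p q (A : 'M[C]_(p, q)) : adj (- A) = - adj A.
Proof. by apply/matrixP => i j; rewrite /adj !mxE rmorphN. Qed.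

Lemma col_mul p q r (A : 'M[C]_(p, q)) (B : 'M[C]_(q, r)) j : col j (A *m B) = A *m col j B.
Proof. by rewrite !colE mulmxA. Qed.

Lemma eq_by_cols p q (A B : 'M[C]_(p, q)) : (forall j, col j A = col j B) -> A = B.
Proof.
move=> h; apply/matrixP => i j.
by have := congr1 (fun N : 'cV[C]_p => N i 0) (h j); rewrite !mxE.
Qed.

Section Code.
Variables (n k m : nat) (S : op C (conf n) -> Prop).
Variable V : 'M[C]_(#|conf n|, #|{: conf k * conf m}|).
Hypothesis code : stabilizer_subsystem_code V S.

Lemma stab_fix t : S t -> t *m V = V.
Proof.
move=> St; apply: eq_by_cols => j; rewrite col_mul.
have [h _] := ssc_codespace code (col j V).
apply: (h _ t St); exists (delta_mx j 0); exact: colE.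
Qed.

Lemma proj_fix p (M : 'M[C]_(#|conf n|, p)) :
  (forall t, S t -> t *m M = M) -> Pi V *m M = M.
Proof.
move=> h; apply: eq_by_cols => j; rewrite col_mul.
have [_ h1] := ssc_codespace code (col j M).
have [w ->] : exists w, col j M = V *m w.
  apply: h1 => t St; by rewrite -col_mul h.
by rewrite /Pi -!mulmxA (mulmxA (adj V)) (ssc_isometry code) mul1mx.
Qed.

Lemma stab_unitary t : S t -> adj t *m t = 1%:M /\ t *m adj t = 1%:M.
Proof.
move=> St; have [c [s ->]] := ssc_pauli code St.
have h := pauli_unitary c s; split => //; exact: mulmx1C.
Qed.

Lemma stab_fix_adj t : S t -> adj V *m t = adj V.
Proof.
move=> St; have [u1 _] := stab_unitary St.
have e : adj t *m V = V by rewrite -{1}(stab_fix St) mulmxA u1 mul1mx.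
by rewrite -[t]adjK -adj_mul e.
Qed.

Lemma adj_Pi : adj (Pi V) = Pi V.
Proof. by rewrite /Pi adj_mul adjK. Qed.

Lemma csp_of_nonzero P : is_pauli P -> adj V *m P *m V != 0 -> CSP V P.
Proof.
move=> [c [s ->]] nz.
set P0 := pauli C c s.
have hc : forall t, S t -> P0 *m t = t *m P0.
  move=> t St; have [c' [s' et]] := ssc_pauli code St.
  have := pauli_comm c c' s s'; rewrite -et -/P0.
  case: (prod_eps s s') => -> ; first by rewrite scale1r.
  rewrite scaleN1r => ac.
  exfalso; move: nz; apply/negP; rewrite negbK.
  have : adj V *m P0 *m (t *m V) = adj V *m (P0 *m t) *m V by rewrite !mulmxA.
  rewrite (stab_fix St) ac mulmxN mulNmx mulmxA (stab_fix_adj St) => e1.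
  have e2 : (2 : C) *: (adj V *m P0 *m V) = 0.
    by rewrite scaler_nat mulr2n {1}e1 addNr.
  move/eqP: e2; rewrite scalemx_eq0 (negbTE two_neq0) /=; by [].
have hPV : Pi V *m (P0 *m V) = P0 *m V.
  apply: proj_fix => t St; by rewrite mulmxA -hc // -mulmxA stab_fix.
have hc' : forall t, S t -> t *m adj P0 = adj P0 *m t.
  move=> t St; have [u1 u2] := stab_unitary St.
  have e := congr1 (@adj C _ _) (hc t St); rewrite !adj_mul in e.
  rewrite -[t *m adj P0]mulmx1 -u1 mulmxA -(mulmxA t (adj P0)) -e mulmxA u2 mul1mx.
  by [].
have hPaV : Pi V *m (adj P0 *m V) = adj P0 *m V.
  apply: proj_fix => t St; by rewrite mulmxA hc' // -mulmxA stab_fix.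
have hA : adj V *m P0 *m Pi V = adj V *m P0.
  have := congr1 (@adj C _ _) hPaV; rewrite !adj_mul !adjK; exact.
rewrite /CSP; transitivity (Pi V *m P0 *m Pi V).
  by rewrite {1}/Pi mulmxA -hPV !mulmxA.
by rewrite [in RHS]/Pi -[in RHS]mulmxA -hA !mulmxA.
Qed.

End Code.

Lemma ipow_mod (e : nat) : 'i ^+ e = 'i ^+ (e %% 4) :> C.
Proof.
have i4 : ('i : C) ^+ 4 = 1 by rewrite (_ : 4 = 2 * 2)%N // exprM sqrCi sqrrN expr1n.
by rewrite {1}(divn_eq e 4) exprD mulnC exprM i4 expr1n mul1r.
Qed.

Lemma ipow_solve (c cL : 'I_4) : exists d : 'I_4, 'i ^+ d * 'i ^+ c = 'i ^+ cL :> C.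
Proof.
have lt : ((cL + 4 - c) %% 4 < 4)%N by rewrite ltn_pmod.
exists (Ordinal lt); rewrite /= -exprD ipow_mod modnDml.
have hc : (c <= cL + 4)%N by apply: leq_trans (ltnW (ltn_ord c)) _; rewrite leq_addl.
rewrite subnK // modnDr modn_small //.
Qed.

Lemma phi0 (T : finType) (Q : op C T) : phi Q 0 = 0.
Proof. by rewrite /phi big1 // => x _; rewrite big1 // => y _; rewrite ent0 mulr0. Qed.

Lemma CSP_scale n k m (V : 'M[C]_(#|conf n|, #|{: conf k * conf m}|)) a P :
  CSP V P -> CSP V (a *: P).
Proof. by rewrite /CSP => h; rewrite -scalemxAl h scalemxAr. Qed.

Lemma CSP_sum n k m (V : 'M[C]_(#|conf n|, #|{: conf k * conf m}|)) (I : finType) (c : I -> C) F :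
  (forall i, CSP V (F i)) -> CSP V (\sum_i c i *: F i).
Proof.
move=> h; rewrite /CSP mulmx_suml mulmx_sumr; apply: eq_bigr => i _.
by rewrite -scalemxAl h scalemxAr.
Qed.

Lemma sandwich_sum p q (I : finType) (c : I -> C) (F : I -> 'M[C]_p) (L : 'M[C]_(q, p)) (Rm : 'M[C]_(p, q)) :
  L *m (\sum_i c i *: F i) *m Rm = \sum_i c i *: (L *m F i *m Rm).
Proof.
rewrite mulmx_sumr mulmx_suml; apply: eq_bigr => i _.
by rewrite -scalemxAr -scalemxAl.
Qed.

Lemma lemma10_aux (n k m : nat)
  (S : op C (conf n) -> Prop)
  (V : 'M[C]_(#|conf n|, #|{: conf k * conf m}|))
  (code : stabilizer_subsystem_code V S)
  (R : {set 'I_n}) :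
  bare_cleanable V R <->
  (forall PL : op C (conf k), is_pauli PL ->
     exists P : op C (conf n),
       [/\ is_pauli P, supported_on (~: R) P & bare_CSP_impl V P PL]).
Proof.
split.
  move=> hcl PL [cL [sPL ->]].
  have [A [hsA [hcA himp]]] := hcl (pauli C cL sPL).
  have [cf [eA hcf]] := expand hsA.
  set Q := tens (pauli C cL sPL) (1%:M : op C (conf m)).
  have : phi Q (adj V *m A *m V) != 0.
    rewrite himp /Q phi_tens mulf_neq0 ?phi_pauli_self //.
    by rewrite -(pauli_one m) phi_pauli_self.
  rewrite eA sandwich_sum phi_lin.
  case: (boolP [exists s, cf s * phi Q (adj V *m pauli C 0 s *m V) != 0]); last first.
    rewrite negb_exists => /forallP h; rewrite big1 ?eqxx // => s _.
    by apply/eqP; have := h s; rewrite negbK.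
  move=> /existsP [s hs] _.
  move: hs; rewrite mulf_eq0 negb_or => /andP [cs nz].
  have nzX : adj V *m pauli C 0 s *m V != 0.
    by apply: contraNneq nz => ->; rewrite phi0.
  have isP : is_pauli (pauli C 0 s) by exists 0, s.
  have csp := csp_of_nonzero code isP nzX.
  have [c [sL [sJ eX]]] := ssc_basis code isP csp.
  move: nz; rewrite eX /Q phi_tens mulf_eq0 negb_or => /andP [nz1 nz2].
  have e1 := phi_pauli_neq0 nz1.
  rewrite -(pauli_one m) in nz2.
  have e2 := phi_pauli_neq0 nz2.
  have [d hd] := ipow_solve c cL.
  exists (pauli C d s); split.
  - by exists d, s.
  - by apply: pauli_supp => q qR; apply: (hcf s cs).
  split.
    by rewrite pauli_scale; apply: CSP_scale.
  rewrite /implements pauli_scale -scalemxAr -scalemxAl eX.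
  rewrite (pauli_ext c (s:=sL) (s':=sPL)) // (pauli_ext 0 (s:=sJ) (s':=fun _ => 0)) //.
  rewrite pauli_one -tensZ [pauli C c sPL]pauli_scale scalerA hd -pauli_scale.
  by [].
move=> h AL.
have [cf [eA _]] := expand (supp_setT AL).
have : forall s : {ffun 'I_k -> 'I_4}, exists P : op C (conf n),
    [/\ is_pauli P, supported_on (~: R) P & bare_CSP_impl V P (pauli C 0 s)].
  move=> s; apply: h; by exists 0, s.
move=> /fin_all_exists [f hf].
exists (\sum_s cf s *: f s); split.
  apply: supp_sum => s; by have [] := hf s.
split.
  apply: CSP_sum => s; by have [_ _ []] := hf s.
rewrite /implements sandwich_sum eA tens_sum; apply: eq_bigr => s _.
by have [_ _ [_ ->]] := hf s.
Qed.


End S.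

Theorem lemma10 (C : numClosedFieldType) (n k m : nat)
  (S : op C (conf n) -> Prop)
  (V : 'M[C]_(#|conf n|, #|{: conf k * conf m}|))
  (hk : (0 < k)%N)
  (code : stabilizer_subsystem_code V S)
  (R : {set 'I_n}) :
  bare_cleanable V R <->
  (forall PL : op C (conf k), is_pauli PL ->
     exists P : op C (conf n),
       [/\ is_pauli P, supported_on (~: R) P & bare_CSP_impl V P PL]).
Proof. exact: (lemma10_aux code R). Qed.
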